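(* Let $f:(k+1)^V\to\mathbb{R}$ be monotone $k$-submodular with all marginal values $\Delta_{e,j}f(S)\in[0,1]$, let $F$ be its multilinear extension, and write $F_{i,j}=\partial F/\partial x_{i,j}$. Let $x\in\mathcal P$, let $(i_1,j_1),(i_2,j_2)\in[n]\times[k]$ be two distinct coordinates, let $\beta,\gamma\ge0$ with $0<\beta+\gamma\le1$, and suppose $x+\beta(e_{i_1,j_1}-e_{i_2,j_2})\in\mathcal P$ and $x-\gamma(e_{i_1,j_1}-e_{i_2,j_2})\in\mathcal P$. Let $x'$ be the random point equal to $x+\beta(e_{i_1,j_1}-e_{i_2,j_2})$ with probability $\frac{\gamma}{\beta+\gamma}$ and to $x-\gamma(e_{i_1,j_1}-e_{i_2,j_2})$ with probability $\frac{\beta}{\beta+\gamma}$. Then for every $\lambda\in[0,1]$, $$\mathbb{E}\big[e^{\lambda(F(x)-F(x'))}\big]\le e^{\lambda^2\beta\gamma\,(F_{i_2,j_2}(x)-F_{i_1,j_1}(x))^2}.$$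
   Context: Let $V=[n]=\{1,\dots,n\}$ and let $k\ge 1$ be an integer. Write $(k+1)^V$ for the set of $k$-tuples $S=(S_1,\dots,S_k)$ of pairwise disjoint subsets of $V$. For $S,T\in(k+1)^V$ let $S\sqcap T=(S_1\cap T_1,\dots,S_k\cap T_k)$ and let $S\sqcup T$ be the tuple whose $j$-th component is $(S_j\cup T_j)\setminus\bigcup_{l\neq j}(S_l\cup T_l)$. A function $f:(k+1)^V\to\mathbb{R}$ is $k$-submodular if $f(S)+f(T)\ge f(S\sqcap T)+f(S\sqcup T)$ for all $S,T\in(k+1)^V$. Write $S\preceq T$ if $S_j\subseteq T_j$ for all $j$; $f$ is monotone if $S\preceq T$ implies $f(S)\le f(T)$. For $e\notin\bigcup_l S_l$ and $j\in[k]$, $\Delta_{e,j}f(S)=f(S_1,\dots,S_{j-1},S_j\cup\{e\},S_{j+1},\dots,S_k)-f(S)$. Let $\mathcal P=\{x\in[0,1]^{n\times k}:\sum_{j=1}^k x_{i,j}\le 1\ \forall i\in[n]\}$. The multilinear extension of $f$ is the polynomial $F(x)=\sum_{S\in(k+1)^V} f(S_1,\dots,S_k)\Big(\prod_{j\in[k]}\prod_{i\in S_j}x_{i,j}\Big)\prod_{i\in V\setminus\bigcup_j S_j}\Big(1-\sum_{j=1}^k x_{i,j}\Big)$, considered on $\mathcal P$. $e_{i,j}$ denotes the standard basis vector of $\mathbb{R}^{n\times k}$ at coordinate $(i,j)$. *)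

(* Defs.v *)
From HB Require Import structures.
From mathcomp Require Import all_boot all_order all_algebra.
From mathcomp Require Import all_classical all_reals all_analysis.
Set Implicit Arguments. Unset Strict Implicit. Unset Printing Implicit Defensive.
Import Order.TTheory GRing.Theory Num.Theory.
Local Open Scope ring_scope.

(* An element S = (S_1,...,S_k) of (k+1)^V, V = [n] (encoded as 'I_n), is
   encoded by its labelling s : V -> option 'I_k, where s i = Some j iff
   i \in S_j, and s i = None iff i is in no S_j. *)
Definition ktuple (n k : nat) := {ffun 'I_n -> option 'I_k}.

Definition comp n k (s : ktuple n k) (j : 'I_k) : {set 'I_n} :=
  [set i | s i == Some j].

Definition kmeet n k (s t : ktuple n k) : ktuple n k :=
  [ffun i => if s i == t i then s i else None].

(* S ⊔ T : j-th component (S_j ∪ T_j) \ ∪_{l<>j} (S_l ∪ T_l) *)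
Definition kjoin n k (s t : ktuple n k) : ktuple n k :=
  [ffun i => match s i, t i with
             | None, b => b
             | a, None => a
             | Some a, Some b => if a == b then Some a else None
             end].

Definition ksubmodular (R : realType) n k (f : ktuple n k -> R) :=
  forall s t : ktuple n k, f (kmeet s t) + f (kjoin s t) <= f s + f t.

Definition kle n k (s t : ktuple n k) := forall j, comp s j \subset comp t j.

Definition kmonotone (R : realType) n k (f : ktuple n k -> R) :=
  forall s t : ktuple n k, kle s t -> f s <= f t.

Definition kadd n k (s : ktuple n k) (e : 'I_n) (j : 'I_k) : ktuple n k :=
  [ffun i => if i == e then Some j else s i].

(* Δ_{e,j} f(S), for e not in any S_l *)
Definition marginal (R : realType) n k (f : ktuple n k -> R)
  (e : 'I_n) (j : 'I_k) (s : ktuple n k) : R := f (kadd s e j) - f s.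

Definition marginals_in01 (R : realType) n k (f : ktuple n k -> R) :=
  forall (s : ktuple n k) (e : 'I_n) (j : 'I_k), s e = None -> 0 <= marginal f e j s <= 1.

Definition inP (R : realType) n k (x : 'M[R]_(n, k)) :=
  (forall i j, 0 <= x i j <= 1) /\ (forall i, \sum_(j < k) x i j <= 1).

Definition multilin (R : realType) n k (f : ktuple n k -> R) (x : 'M[R]_(n, k)) : R :=
  \sum_(s : ktuple n k) f s *
    \prod_(i < n) match s i with
                  | Some j => x i j
                  | None => 1 - \sum_(l < k) x i l
                  end.

Definition partialF (R : realType) n k (F : 'M[R]_(n, k) -> R)
  (i : 'I_n) (j : 'I_k) (x : 'M[R]_(n, k)) : R :=
  derive1 (fun t : R => F (x + t *: delta_mx i j)) 0.

(* Main.v *)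
Require Import Defs.
From HB Require Import structures.
From mathcomp Require Import all_boot all_order all_algebra.
From mathcomp Require Import all_classical all_reals all_analysis.
Import Order.TTheory GRing.Theory Num.Theory.
Local Open Scope ring_scope.
From mathcomp Require Import ring lra.

Section ML.
Variables (R : realType) (n k : nat) (f : ktuple n k -> R).

Definition wrow (y : 'M[R]_(n,k)) (i : 'I_n) (o : option 'I_k) : R :=
  match o with Some j => y i j | None => 1 - \sum_(l < k) y i l end.
Definition lrow (y : 'M[R]_(n,k)) (i : 'I_n) (o : option 'I_k) : R :=
  match o with Some j => y i j | None => - \sum_(l < k) y i l end.

Lemma multilinE y : multilin f y = \sum_(s : ktuple n k) f s * \prod_i wrow y i (s i).
Proof. by []. Qed.

Lemma wrowD y d t i o : wrow (y + t *: d) i o = wrow y i o + t * lrow d i o.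
Proof.
case: o => [j|] /=; rewrite ?mxE //.
rewrite (eq_bigr (fun l => y i l + t * d i l)); last by move=> l _; rewrite !mxE.
rewrite big_split /= -mulr_sumr; ring.
Qed.

Definition sig (b : 'I_k) (o : option 'I_k) : R :=
  match o with Some j => (j == b)%:R | None => -1 end.

Lemma lrow_delta a b i o : lrow (delta_mx a b) i o = (i == a)%:R * sig b o.
Proof.
case: o => [j|] /=; rewrite ?mxE.
  by rewrite -mulnb natrM.
case: eqVneq => [->|ne] /=.
  rewrite (bigD1 b) //= big1 => [|l lb]; rewrite !mxE ?eqxx //=.
    by rewrite addr0 mul1r.
  by rewrite (negbTE lb).
rewrite big1 ?mul0r ?oppr0 // => l _; rewrite mxE (negbTE ne) //.
Qed.

Lemma lrowB d1 d2 i o : lrow (d1 - d2) i o = lrow d1 i o - lrow d2 i o.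
Proof.
case: o => [j|] /=; rewrite ?mxE //.
rewrite (eq_bigr (fun l => d1 i l - d2 i l)); last by move=> l _; rewrite !mxE.
by rewrite sumrB opprB addrC opprK.
Qed.

Lemma prod1 (c v : 'I_n -> R) (t : R) a :
  (forall i, i != a -> v i = 0) ->
  \prod_i (c i + t * v i) = \prod_i c i + t * (v a * \prod_(i | i != a) c i).
Proof.
move=> hv; rewrite (bigD1 a) //= [X in _ = X + _](bigD1 a) //=.
rewrite (eq_bigr c) => [|i ia]; last by rewrite hv // mulr0 addr0.
ring.
Qed.

Lemma prod_split2 (c : 'I_n -> R) a1 a2 : a1 != a2 ->
  \prod_(i | i != a1) c i = c a2 * \prod_(i | (i != a1) && (i != a2)) c i.
Proof. by move=> ne; rewrite (bigD1 a2) //= eq_sym. Qed.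

Lemma prod2 (c v1 v2 : 'I_n -> R) (t : R) a1 a2 : a1 != a2 ->
  (forall i, i != a1 -> v1 i = 0) -> (forall i, i != a2 -> v2 i = 0) ->
  \prod_i (c i + t * (v1 i - v2 i)) = \prod_i c i
    + t * (v1 a1 * \prod_(i | i != a1) c i - v2 a2 * \prod_(i | i != a2) c i)
    - t ^+ 2 * (v1 a1 * v2 a2 * \prod_(i | (i != a1) && (i != a2)) c i).
Proof.
move=> ne h1 h2.
have ne' : a2 != a1 by rewrite eq_sym.
have e : forall g : 'I_n -> R, \prod_i g i = g a1 * (g a2 * \prod_(i | (i != a1) && (i != a2)) g i).
  by move=> g; rewrite (bigD1 a1) //= (@prod_split2 _ a1 a2 ne).
have e2 : forall g : 'I_n -> R, \prod_(i | i != a2) g i = g a1 * \prod_(i | (i != a1) && (i != a2)) g i.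
  move=> g; rewrite (@prod_split2 _ a2 a1 ne').
  by apply: congr1; apply: eq_bigl => i; rewrite andbC.
rewrite e e (@prod_split2 _ a1 a2 ne) e2.
rewrite (eq_bigr c) => [|i /andP[i1 i2]]; last by rewrite h1 // h2 // subrr mulr0 addr0.
rewrite (h1 a2 ne') (h2 a1 ne).
ring.
Qed.

Definition derive1_aff_dummy := tt.

Definition R1 (x : 'M[R]_(n,k)) a (s : ktuple n k) := \prod_(i | i != a) wrow x i (s i).
Definition R2 (x : 'M[R]_(n,k)) a1 a2 (s : ktuple n k) :=
  \prod_(i | (i != a1) && (i != a2)) wrow x i (s i).
Definition Acoef x a b := \sum_(s : ktuple n k) f s * (sig b (s a) * R1 x a s).
Definition Ccoef x a1 b1 a2 b2 :=
  \sum_(s : ktuple n k) f s * (sig b1 (s a1) * sig b2 (s a2) * R2 x a1 a2 s).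

Lemma F_delta x a b t :
  multilin f (x + t *: delta_mx a b) = multilin f x + t * Acoef x a b.
Proof.
rewrite !multilinE /Acoef mulr_sumr -big_split /=; apply: eq_bigr => s _.
rewrite (eq_bigr (fun i => wrow x i (s i) + t * ((i == a)%:R * sig b (s i))));
  last by move=> i _; rewrite wrowD lrow_delta.
rewrite (@prod1 _ _ _ a) ?eqxx ?mul1r /R1; first ring.
by move=> i ia; rewrite (negbTE ia) mul0r.
Qed.

Lemma F_dir x a1 b1 a2 b2 t : a1 != a2 ->
  multilin f (x + t *: (delta_mx a1 b1 - delta_mx a2 b2)) =
  multilin f x + t * (Acoef x a1 b1 - Acoef x a2 b2) - t ^+ 2 * Ccoef x a1 b1 a2 b2.
Proof.
move=> ne.
rewrite !multilinE /Acoef /Ccoef.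
transitivity (\sum_(s : ktuple n k) (f s * \prod_i wrow x i (s i)
   + t * (f s * (sig b1 (s a1) * R1 x a1 s) - f s * (sig b2 (s a2) * R1 x a2 s))
   - t ^+ 2 * (f s * (sig b1 (s a1) * sig b2 (s a2) * R2 x a1 a2 s)))); last first.
  by rewrite sumrB big_split /= -!mulr_sumr sumrB.
apply: eq_bigr => s _.
rewrite (eq_bigr (fun i => wrow x i (s i) + t * ((i == a1)%:R * sig b1 (s i) - (i == a2)%:R * sig b2 (s i))));
  last by move=> i _; rewrite wrowD lrowB !lrow_delta.
rewrite (@prod2 _ _ _ _ a1 a2) ?eqxx ?mul1r /R1 /R2 //; first ring.
  by move=> i ia; rewrite (negbTE ia) mul0r.
by move=> i ia; rewrite (negbTE ia) mul0r.
Qed.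

Lemma F_dir_same x a b1 b2 t :
  multilin f (x + t *: (delta_mx a b1 - delta_mx a b2)) =
  multilin f x + t * (Acoef x a b1 - Acoef x a b2).
Proof.
rewrite !multilinE /Acoef.
transitivity (\sum_(s : ktuple n k) (f s * \prod_i wrow x i (s i)
   + t * (f s * (sig b1 (s a) * R1 x a s) - f s * (sig b2 (s a) * R1 x a s)))); last first.
  by rewrite big_split /= -!mulr_sumr sumrB.
apply: eq_bigr => s _.
rewrite (eq_bigr (fun i => wrow x i (s i) + t * ((i == a)%:R * sig b1 (s i) - (i == a)%:R * sig b2 (s i))));
  last by move=> i _; rewrite wrowD lrowB !lrow_delta.
rewrite (@prod1 _ _ _ a) ?eqxx ?mul1r /R1; first ring.
by move=> i ia; rewrite (negbTE ia) !mul0r subrr.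
Qed.

Lemma sum_option (h : option 'I_k -> R) :
  \sum_(o : option 'I_k) h o = h None + \sum_(j < k) h (Some j).
Proof.
rewrite (bigD1 None) //=; congr (_ + _).
rewrite (reindex_omap Some (fun o => o)) /=; last by case.
apply: eq_bigl => j; by rewrite eqxx.
Qed.

Lemma wrow_ge0 x i o : inP x -> 0 <= wrow x i o.
Proof.
case=> h1 h2; case: o => [j|] /=; first by case/andP: (h1 i j).
by rewrite subr_ge0.
Qed.

Lemma R1_ge0 x a s : inP x -> 0 <= R1 x a s.
Proof. by move=> hx; apply: prodr_ge0 => i _; exact: wrow_ge0. Qed.

Lemma R2_ge0 x a1 a2 s : inP x -> 0 <= R2 x a1 a2 s.
Proof. by move=> hx; apply: prodr_ge0 => i _; exact: wrow_ge0. Qed.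

Definition sw (b : 'I_k) (o : option 'I_k) :=
  if o == None then Some b else if o == Some b then None else o.

Lemma swK b : involutive (sw b).
Proof.
move=> [j|]; rewrite /sw /=; last by rewrite eqxx.
case: (eqVneq j b) => [->|ne] /=.
  by rewrite !eqxx.
have sne : (Some j == Some b) = false by exact: negbTE.
by rewrite sne /= sne.
Qed.

Lemma sw_eqS b o : (sw b o == Some b) = (o == None).
Proof.
case: o => [j|]; rewrite /sw /=; last by rewrite !eqxx.
case: (eqVneq j b) => [->|ne] /=; first by rewrite !eqxx.
have sne : (Some j == Some b) = false by exact: negbTE.
by rewrite sne /= sne.
Qed.

Definition tau a b (s : ktuple n k) : ktuple n k :=
  [ffun i => if i == a then sw b (s i) else s i].

Lemma tau_a a b s : tau a b s a = sw b (s a).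
Proof. by rewrite ffunE eqxx. Qed.

Lemma tau_ne a b s i : i != a -> tau a b s i = s i.
Proof. by move=> ia; rewrite ffunE (negbTE ia). Qed.

Lemma tauK a b : involutive (tau a b).
Proof.
move=> s; apply/ffunP => i; rewrite !ffunE.
by case: eqP => [->|] //; rewrite swK.
Qed.

Lemma R1_tau x a b s : R1 x a (tau a b s) = R1 x a s.
Proof. by apply: eq_bigr => i ia; rewrite tau_ne. Qed.

Lemma A_reindex x a b :
  Acoef x a b = \sum_(s : ktuple n k) (s a == None)%:R * ((f (tau a b s) - f s) * R1 x a s).
Proof.
have e1 : Acoef x a b = \sum_(s : ktuple n k) (s a == Some b)%:R * (f s * R1 x a s)
                      - \sum_(s : ktuple n k) (s a == None)%:R * (f s * R1 x a s).
  rewrite /Acoef -sumrB; apply: eq_bigr => s _.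
  case: (s a) => [j|] /=.
    rewrite [Some j == Some b]/=; ring.
  ring.
rewrite e1 (reindex_inj (can_inj (tauK a b))) /= -sumrB; apply: eq_bigr => s _.
rewrite tau_a sw_eqS R1_tau; ring.
Qed.

Lemma tau_kadd a b (s : ktuple n k) : s a = None -> tau a b s = Defs.kadd s a b.
Proof.
move=> h; apply/ffunP => i; rewrite !ffunE.
by case: eqP => [->|] //; rewrite h /sw eqxx.
Qed.

Lemma sum_R1 x a : inP x ->
  \sum_(s : ktuple n k) (s a == None)%:R * R1 x a s = 1.
Proof.
move=> hx.
pose g (i : 'I_n) (o : option 'I_k) : R :=
  if i == a then (o == None)%:R else wrow x i o.
transitivity (\sum_(s : {ffun 'I_n -> option 'I_k}) \prod_i g i (s i)).
  apply: eq_bigr => s _; rewrite [RHS](bigD1 a) //= /g eqxx; congr (_ * _).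
  by apply: eq_bigr => i ia; rewrite (negbTE ia).
rewrite -bigA_distr_bigA /=; apply: big1 => i _.
rewrite sum_option /g; case: eqP => _ /=.
  by rewrite big1 ?addr0.
by rewrite subrK.
Qed.

Lemma A_bounds x a b : inP x -> marginals_in01 f -> 0 <= Acoef x a b <= 1.
Proof.
move=> hx hm; rewrite A_reindex; apply/andP; split.
  apply: sumr_ge0 => s _; case: eqP => h /=; last by rewrite mul0r.
  rewrite mul1r; apply: mulr_ge0; last exact: R1_ge0.
  by rewrite tau_kadd //; case/andP: (hm s a b h).
apply: (le_trans (y := \sum_(s : ktuple n k) (s a == None)%:R * R1 x a s)); last by rewrite (sum_R1 x a hx).
apply: ler_sum => s _.
case: eqP => h /=; last by rewrite !mul0r.
rewrite !mul1r; apply: ler_piMl; first exact: R1_ge0.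
by rewrite tau_kadd //; case/andP: (hm s a b h).
Qed.

Lemma sigE b o : sig b o = (o == Some b)%:R - (o == None)%:R.
Proof. by case: o => [j|] /=; rewrite ?subr0 ?sub0r. Qed.

Lemma sum4 (F1 F2 F3 F4 : ktuple n k -> R) :
  \sum_(s : ktuple n k) (F1 s - F2 s - F3 s + F4 s) =
  \sum_(s : ktuple n k) F1 s - \sum_(s : ktuple n k) F2 s
  - \sum_(s : ktuple n k) F3 s + \sum_(s : ktuple n k) F4 s.
Proof. by rewrite big_split /= !sumrB. Qed.

Section Pair.
Variables (x : 'M[R]_(n,k)) (a1 a2 : 'I_n) (b1 b2 : 'I_k).
Hypothesis ne : a1 != a2.

Let ne' : a2 != a1. Proof. by rewrite eq_sym. Qed.

Lemma R2_tau1 s : R2 x a1 a2 (tau a1 b1 s) = R2 x a1 a2 s.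
Proof. by apply: eq_bigr => i /andP[i1 i2]; rewrite tau_ne. Qed.

Lemma R2_tau2 s : R2 x a1 a2 (tau a2 b2 s) = R2 x a1 a2 s.
Proof. by apply: eq_bigr => i /andP[i1 i2]; rewrite tau_ne. Qed.

Lemma C_reindex : Ccoef x a1 b1 a2 b2 =
  \sum_(s : ktuple n k) (s a1 == None)%:R * (s a2 == None)%:R *
     ((f (tau a1 b1 (tau a2 b2 s)) - f (tau a1 b1 s) - f (tau a2 b2 s) + f s)
       * R2 x a1 a2 s).
Proof.
rewrite /Ccoef.
pose G c1 c2 (s : ktuple n k) := (s a1 == c1)%:R * (s a2 == c2)%:R * (f s * R2 x a1 a2 s).
transitivity (\sum_(s : ktuple n k) (G (Some b1) (Some b2) s - G (Some b1) None s
                - G None (Some b2) s + G None None s)).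
  apply: eq_bigr => s _; rewrite /G !sigE; ring.
rewrite sum4.
rewrite (reindex_inj (inj_comp (can_inj (tauK a1 b1)) (can_inj (tauK a2 b2)))) /=.
rewrite [X in _ - X - _ + _](reindex_inj (can_inj (tauK a1 b1))) /=.
rewrite [X in _ - _ - X + _](reindex_inj (can_inj (tauK a2 b2))) /=.
rewrite -sum4; apply: eq_bigr => s _; rewrite /G.
rewrite !tau_a (tau_ne _ _ _ _ ne) (tau_ne _ _ _ _ ne') tau_a !sw_eqS.
rewrite (tau_ne _ _ _ _ ne') !R2_tau1 !R2_tau2.
ring.
Qed.

Lemma pair_meet_join (s : ktuple n k) : s a1 = None -> s a2 = None ->
  Defs.kmeet (tau a1 b1 s) (tau a2 b2 s) = s /\
  Defs.kjoin (tau a1 b1 s) (tau a2 b2 s) = tau a1 b1 (tau a2 b2 s).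
Proof.
move=> h1 h2; split; apply/ffunP => i; rewrite !ffunE.
  case: (eqVneq i a1) => [->|n1]; first by rewrite ?eqxx (negbTE ne) h1 /sw /=.
  case: (eqVneq i a2) => [->|n2]; first by rewrite ?eqxx ?(negbTE ne') h2 /sw /=.
  by rewrite ?(negbTE n1) ?(negbTE n2) eqxx.
case: (eqVneq i a1) => [->|n1]; first by rewrite ?eqxx (negbTE ne) h1 /sw /=.
case: (eqVneq i a2) => [->|n2]; first by rewrite ?eqxx ?(negbTE ne') h2 /sw /=.
rewrite ?(negbTE n1) ?(negbTE n2).
by case: (s i) => // c; rewrite eqxx.
Qed.

Lemma C_le0 : inP x -> ksubmodular f -> Ccoef x a1 b1 a2 b2 <= 0.
Proof.
move=> hx hs; rewrite C_reindex -oppr_ge0 -sumrN; apply: sumr_ge0 => s _.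
rewrite oppr_ge0.
case: (eqVneq (s a1) None) => h1 /=; last by rewrite !mul0r.
case: (eqVneq (s a2) None) => h2 /=; last by rewrite mulr0 mul0r.
rewrite !mul1r; apply: mulr_le0_ge0; last exact: R2_ge0.
have [em ej] := pair_meet_join s h1 h2.
have := hs (tau a1 b1 s) (tau a2 b2 s); rewrite em ej.
lra.
Qed.
End Pair.
End ML.
Section ExpB.
Variable R : realType.

Lemma exp_le_inv (y : R) : y < 1 -> expR y * (1 - y) <= 1.
Proof.
move=> y1.
have h := expR_ge1Dx (- y).
have e0 := expR_gt0 y.
have : expR y * (1 - y) <= expR y * expR (- y).
  by rewrite ler_pM2l // addrC.
by rewrite -expRD subrr expR0.
Qed.

Lemma exp_neg_bound (y : R) : -1 <= y <= 0 -> expR y <= 1 + y + y ^+ 2.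
Proof.
move=> /andP[h1 h2].
have h := @exp_le_inv y ltac:(lra).
have e0 := expR_gt0 y.
have : 1 <= (1 - y) * (1 + y + y ^+ 2).
  have -> : (1 - y) * (1 + y + y ^+ 2) = 1 - y ^+ 3 by ring.
  have : y ^+ 3 <= 0.
    by rewrite exprS mulr_le0_ge0 // sqr_ge0.
  lra.
move=> hh.
have : expR y * (1 - y) <= (1 + y + y ^+ 2) * (1 - y) by lra.
rewrite ler_pM2r //; lra.
Qed.

Lemma exp_base (z : R) : 0 <= z <= 1/8 -> expR z <= 1 + z + 8/7 * z ^+ 2.
Proof.
move=> /andP[h1 h2].
have h := @exp_le_inv z ltac:(lra).
have e0 := expR_gt0 z.
have : 1 <= (1 - z) * (1 + z + 8/7 * z ^+ 2).
  have -> : (1 - z) * (1 + z + 8/7 * z ^+ 2) = 1 + z ^+ 2 * (1/7 - 8/7 * z) by field.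
  have : 0 <= z ^+ 2 * (1/7 - 8/7 * z) by apply: mulr_ge0; [exact: sqr_ge0| lra].
  lra.
move=> hh.
have : expR z * (1 - z) <= (1 + z + 8/7 * z ^+ 2) * (1 - z) by lra.
rewrite ler_pM2r //; lra.
Qed.

Lemma exp_step (a b r : R) : 0 <= a -> 0 <= r ->
  1 + 2 * a + 2 * a * r + a ^+ 2 * r ^+ 2 <= 4 * b ->
  (forall z, 0 <= z <= r -> expR z <= 1 + z + a * z ^+ 2) ->
  forall y, 0 <= y <= 2 * r -> expR y <= 1 + y + b * y ^+ 2.
Proof.
move=> a0 r0 hab hz y /andP[y0 yr].
pose z := y / 2.
have ey : y = z + z by rewrite /z; field.
have z0 : 0 <= z <= r by apply/andP; split; rewrite /z; lra.
have ez := hz z z0.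
have e0 := expR_gt0 z.
rewrite ey expRD.
have q0 : 0 <= 1 + z + a * z ^+ 2.
  have : 0 <= a * z ^+ 2 by apply: mulr_ge0 => //; exact: sqr_ge0.
  move: z0 => /andP[? ?]; lra.
apply: (le_trans (y := (1 + z + a * z ^+ 2) * (1 + z + a * z ^+ 2))).
  by apply: ler_pM => //; exact: ltW.
move: z0 => /andP[z0 zr].
have h1 : a * z <= a * r by apply: ler_wpM2l.
have h2 : a ^+ 2 * z ^+ 2 <= a ^+ 2 * r ^+ 2.
  have hzr : z ^+ 2 <= r ^+ 2 by nra.
  by rewrite ler_wpM2l // sqr_ge0.
have h3 : 0 <= z ^+ 2 * (4 * b - (1 + 2 * a + 2 * a * z + a ^+ 2 * z ^+ 2)).
  apply: mulr_ge0; [exact: sqr_ge0| lra].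
have -> : (z + z) ^+ 2 = 4 * z ^+ 2 by ring.
have : (1 + z + a * z ^+ 2) * (1 + z + a * z ^+ 2) + z ^+ 2 * (4 * b - (1 + 2 * a + 2 * a * z + a ^+ 2 * z ^+ 2)) = 1 + (z + z) + b * (4 * z ^+ 2) by ring.
lra.
Qed.

Lemma exp_pos_bound (y : R) : 0 <= y <= 1 -> expR y <= 1 + y + y ^+ 2.
Proof.
move=> hy.
have s1 := @exp_step (8/7) (9/10) (1/8) ltac:(lra) ltac:(lra) ltac:(lra) exp_base.
have s2 := @exp_step (9/10) (83/100) (1/4) ltac:(lra) ltac:(lra) ltac:(lra)
   (fun z hz => s1 z ltac:(move: hz => /andP[? ?]; apply/andP; split; lra)).
have s3 := @exp_step (83/100) 1 (1/2) ltac:(lra) ltac:(lra) ltac:(lra)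
   (fun z hz => s2 z ltac:(move: hz => /andP[? ?]; apply/andP; split; lra)).
rewrite -[y ^+ 2]mul1r; apply: s3.
move: hy => /andP[? ?]; apply/andP; split; lra.
Qed.

Lemma exp_quad (y : R) : -1 <= y <= 1 -> expR y <= 1 + y + y ^+ 2.
Proof.
move=> /andP[h1 h2]; case: (lerP y 0) => hy.
  by apply: exp_neg_bound; apply/andP; split.
by apply: exp_pos_bound; apply/andP; split => //; exact: ltW.
Qed.
End ExpB.
Lemma derive1_aff (R : realType) (c a : R) :
  derive1 (fun t : R => c + t * a) 0 = a.
Proof.
have e : (fun t : R => c + t * a) = (cst c) + (a \o* id).
  by apply/funext => t /=.
have di : derivable (a \o* (@id R)) 0 1.
  have -> : a \o* (@id R) = (@id R) * (cst a) by apply/funext.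
  by apply: derivableM; [exact: derivable_id | exact: derivable_cst].
rewrite e derive1E deriveD //=; try exact: derivable_cst.
by rewrite derive_cst add0r deriveMr ?derive_id ?mulr1 //; exact: derivable_id.
Qed.
Theorem mainTheorem10 (R : realType) (n k : nat) (f : ktuple n k -> R)
  (x : 'M[R]_(n, k)) (i1 i2 : 'I_n) (j1 j2 : 'I_k) (beta gamma lambda : R) :
  (0 < k)%N ->
  ksubmodular f -> kmonotone f -> marginals_in01 f ->
  inP x -> (i1, j1) != (i2, j2) ->
  0 <= beta -> 0 <= gamma -> 0 < beta + gamma -> beta + gamma <= 1 ->
  inP (x + beta *: (delta_mx i1 j1 - delta_mx i2 j2)) ->
  inP (x - gamma *: (delta_mx i1 j1 - delta_mx i2 j2)) ->
  0 <= lambda <= 1 ->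
  let F := multilin f in
  let d := delta_mx i1 j1 - delta_mx i2 j2 in
  gamma / (beta + gamma) * expR (lambda * (F x - F (x + beta *: d))) +
  beta / (beta + gamma) * expR (lambda * (F x - F (x - gamma *: d)))
  <= expR (lambda ^+ 2 * beta * gamma *
           (partialF F i2 j2 x - partialF F i1 j1 x) ^+ 2).
Proof.
move=> _ hs _ hm hx _ hb hg hbg hbg1 _ _ /andP[l0 l1].
cbv zeta.
set F := multilin f.
set d := delta_mx i1 j1 - delta_mx i2 j2.
pose A1 := Acoef _ _ _ f x i1 j1.
pose A2 := Acoef _ _ _ f x i2 j2.
have pF : forall a b, partialF F a b x = Acoef _ _ _ f x a b.
  move=> a b; rewrite /partialF.
  have -> : (fun t => F (x + t *: delta_mx a b)) = (fun t => F x + t * Acoef _ _ _ f x a b).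
    by apply/funext => t; rewrite /F F_delta.
  exact: derive1_aff.
have [C [C0 hC]] : exists C, C <= 0 /\ forall t, F (x + t *: d) = F x + t * (A1 - A2) - t ^+ 2 * C.
  case: (eqVneq i1 i2) => [e|ne].
    exists 0; split => // t; rewrite /d /F -e F_dir_same /A1 /A2 e; ring.
  exists (Ccoef _ _ _ f x i1 j1 i2 j2); split; first exact: C_le0.
  by move=> t; rewrite /d /F F_dir.
have /andP[a10 a11] : 0 <= A1 <= 1 by exact: A_bounds.
have /andP[a20 a21] : 0 <= A2 <= 1 by exact: A_bounds.
rewrite !pF -/A1 -/A2.
set D := A2 - A1.
have e1 : F x - F (x + beta *: d) = beta * D + beta ^+ 2 * C.
  by rewrite hC /D; ring.
have e2 : F x - F (x - gamma *: d) = - (gamma * D) + gamma ^+ 2 * C.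
  by rewrite -scaleNr hC /D; ring.
rewrite e1 e2.
have D1 : -1 <= D <= 1 by apply/andP; split; rewrite /D; lra.
have lb0 : 0 <= lambda * beta by apply: mulr_ge0.
have lb1 : lambda * beta <= 1 by nra.
have lg0 : 0 <= lambda * gamma by apply: mulr_ge0.
have lg1 : lambda * gamma <= 1 by nra.
have E1 : expR (lambda * (beta * D + beta ^+ 2 * C)) <=
          1 + lambda * beta * D + (lambda * beta * D) ^+ 2.
  apply: (le_trans (y := expR (lambda * beta * D))).
    rewrite ler_expR.
    have : lambda * (beta ^+ 2 * C) <= 0.
      apply: mulr_ge0_le0 => //; apply: mulr_ge0_le0 => //; exact: sqr_ge0.
    have -> : lambda * (beta * D + beta ^+ 2 * C) = lambda * beta * D + lambda * (beta ^+ 2 * C) by ring.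
    lra.
  apply: exp_quad; move: D1 => /andP[? ?]; apply/andP; split; nra.
have E2 : expR (lambda * (- (gamma * D) + gamma ^+ 2 * C)) <=
          1 + (- (lambda * gamma * D)) + (- (lambda * gamma * D)) ^+ 2.
  apply: (le_trans (y := expR (- (lambda * gamma * D)))).
    rewrite ler_expR.
    have : lambda * (gamma ^+ 2 * C) <= 0.
      apply: mulr_ge0_le0 => //; apply: mulr_ge0_le0 => //; exact: sqr_ge0.
    have -> : lambda * (- (gamma * D) + gamma ^+ 2 * C) = - (lambda * gamma * D) + lambda * (gamma ^+ 2 * C) by ring.
    lra.
  apply: exp_quad; move: D1 => /andP[? ?]; apply/andP; split; nra.
have p0 : 0 <= gamma / (beta + gamma) by apply: divr_ge0 => //; exact: ltW.
have q0 : 0 <= beta / (beta + gamma) by apply: divr_ge0 => //; exact: ltW.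
apply: (le_trans (y := gamma / (beta + gamma) * (1 + lambda * beta * D + (lambda * beta * D) ^+ 2)
   + beta / (beta + gamma) * (1 + (- (lambda * gamma * D)) + (- (lambda * gamma * D)) ^+ 2))).
  by apply: lerD; apply: ler_wpM2l.
have -> : gamma / (beta + gamma) * (1 + lambda * beta * D + (lambda * beta * D) ^+ 2)
   + beta / (beta + gamma) * (1 + (- (lambda * gamma * D)) + (- (lambda * gamma * D)) ^+ 2)
   = 1 + lambda ^+ 2 * beta * gamma * D ^+ 2.
  field; rewrite lt0r_neq0 //.
exact: expR_ge1Dx.
Qed.
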